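(* Let $t$ and $u$ be $\lambda$-terms (terms without explicit substitutions). Then $t \equiv_{S} u$ if and only if $t \equiv_{V} u$, where $\equiv_S$ is the contextual equivalence induced by weak reduction $\to_{w}$ of the silly substitution calculus and $\equiv_V$ is the contextual equivalence induced by call-by-value reduction $\to_{\beta_v}$.
   Context: Silly substitution calculus (SSC). Terms: $t,u,s ::= x \mid \lambda x.t \mid t\,u \mid t[x\backslash u]$, where $t[x\backslash u]$ is an explicit substitution (ES) binding $x$ in $t$; $\lambda x.t$ also binds $x$ in $t$; terms are taken up to $\alpha$-renaming; $\mathrm{fv}(t[x\backslash u]) = (\mathrm{fv}(t)\setminus\{x\})\cup \mathrm{fv}(u)$. Values are abstractions only: $v ::= \lambda x.t$. Substitution contexts: $S ::= \langle\cdot\rangle \mid S[x\backslash u]$. Weak contexts: $W ::= \langle\cdot\rangle \mid W\,t \mid t\,W \mid t[x\backslash W] \mid W[x\backslash u]$ (the hole is never under an abstraction). $W\langle t\rangle$ denotes plugging (which may capture variables); $W\langle\langle t\rangle\rangle$ means plugging where $W$ does not capture the free variables of $t$. Root rules: (multiplicative) $S\langle \lambda x.t\rangle u \mapsto_m S\langle t[x\backslash u]\rangle$; (exponential) $W\langle\langle x\rangle\rangle[x\backslash u] \mapsto_{e} W\langle\langle u\rangle\rangle[x\backslash u]$ for $W$ a weak context; (GC by value) $t[x\backslash S\langle v\rangle] \mapsto_{gcv} S\langle t\rangle$ if $x\notin\mathrm{fv}(t)$, $v$ a value. $\to_{wm}$, $\to_{we}$, $\to_{wgcv}$ are the closures of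 these root rules under weak contexts, and $\to_w := \to_{wm}\cup\to_{we}\cup\to_{wgcv}$. Call-by-value $\lambda$-calculus: $\lambda$-terms $t ::= x\mid \lambda x.t\mid tu$, values are abstractions, CbV contexts $V ::= \langle\cdot\rangle \mid t V \mid V t$, root rule $(\lambda x.t)v \mapsto_{\beta_v} t\{x:=v\}$ (meta-level capture-avoiding substitution) for $v$ a value, and $\to_{\beta_v}$ its closure under CbV contexts. Contextual equivalence: for a rewriting relation $\to$ on a language of terms, with contexts being terms of that language with exactly one hole (placed anywhere, including under abstractions), $t\equiv u$ iff for every context $C$ such that $C\langle t\rangle$ and $C\langle u\rangle$ are closed, $C\langle t\rangle$ is weakly $\to$-normalizing (reduces to a $\to$-normal form) iff $C\langle u\rangle$ is. $\equiv_S$ is this for $\to_w$ on SSC terms and contexts, $\equiv_V$ for $\to_{\beta_v}$ on $\lambda$-terms and $\lambda$-contexts. *)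

(* Defs.v *)
(* Terms are represented with de Bruijn indices (= terms up to
   alpha-renaming). Plugging into contexts does NOT shift, i.e. it may capture,
   exactly as the paper's plugging C<t>. *)
From Stdlib Require Import Arith List Relations.
Import ListNotations.

(* ES t u  represents  t[x\u] : index 0 of t refers to x, u is outside. *)
Inductive term : Type :=
| Var : nat -> term
| Lam : term -> term
| App : term -> term -> term
| ES  : term -> term -> term.

Fixpoint lift (d c : nat) (t : term) : term :=
  match t with
  | Var n => if n <? c then Var n else Var (n + d)
  | Lam b => Lam (lift d (S c) b)
  | App a b => App (lift d c a) (lift d c b)
  | ES a b => ES (lift d (S c) a) (lift d c b)
  end.

(* Substitution contexts S ::= <.> | S[x\u]; the list head is the outermost ES. *)
Fixpoint splug (s : list term) (t : term) : term :=
  match s with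
  | nil => t
  | u :: s' => ES (splug s' t) u
  end.

Inductive wctx : Type :=
| WHole : wctx
| WAppL : wctx -> term -> wctx
| WAppR : term -> wctx -> wctx
| WESArg : term -> wctx -> wctx
| WESBody : wctx -> term -> wctx.

Fixpoint wplug (W : wctx) (t : term) : term :=
  match W with
  | WHole => t
  | WAppL W' u => App (wplug W' t) u
  | WAppR u W' => App u (wplug W' t)
  | WESArg u W' => ES u (wplug W' t)
  | WESBody W' u => ES (wplug W' t) u
  end.

Fixpoint wdepth (W : wctx) : nat :=
  match W with
  | WHole => 0
  | WAppL W' _ => wdepth W'
  | WAppR _ W' => wdepth W'
  | WESArg _ W' => wdepth W'
  | WESBody W' _ => S (wdepth W')
  end.

Inductive ssc_root : term -> term -> Prop :=
(* S<\x.t> u  |->m  S<t[x\u]>   (u moved under the binders of S) *)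
| root_m : forall s t u,
    ssc_root (App (splug s (Lam t)) u) (splug s (ES t (lift (length s) 0 u)))
(* W<<x>>[x\u] |->e W<<u>>[x\u]  (the hole occurrence is the variable bound by
   the outer ES, i.e. index wdepth W; u is moved under wdepth W + 1 binders) *)
| root_e : forall W u,
    ssc_root (ES (wplug W (Var (wdepth W))) u)
             (ES (wplug W (lift (S (wdepth W)) 0 u)) u)
(* t[x\S<v>] |->gcv S<t> if x notin fv(t): x notin fv(t) means the body is
   lift 1 0 t for the term t with x removed *)
| root_gcv : forall t s v,
    ssc_root (ES (lift 1 0 t) (splug s (Lam v))) (splug s (lift (length s) 0 t)).

Inductive step_w : term -> term -> Prop :=
| w_root : forall t t', ssc_root t t' -> step_w t t'
| w_appL : forall t t' u, step_w t t' -> step_w (App t u) (App t' u)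
| w_appR : forall t u u', step_w u u' -> step_w (App t u) (App t u')
| w_esbody : forall t t' u, step_w t t' -> step_w (ES t u) (ES t' u)
| w_esarg : forall t u u', step_w u u' -> step_w (ES t u) (ES t u').

Inductive sctx : Type :=
| CHole : sctx
| CLam : sctx -> sctx
| CAppL : sctx -> term -> sctx
| CAppR : term -> sctx -> sctx
| CESBody : sctx -> term -> sctx
| CESArg : term -> sctx -> sctx.

Fixpoint cplug (C : sctx) (t : term) : term :=
  match C with
  | CHole => t
  | CLam C' => Lam (cplug C' t)
  | CAppL C' u => App (cplug C' t) u
  | CAppR u C' => App u (cplug C' t)
  | CESBody C' u => ES (cplug C' t) u
  | CESArg u C' => ES u (cplug C' t)
  end.

Fixpoint closed_at (k : nat) (t : term) : Prop :=
  match t with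
  | Var n => n < k
  | Lam b => closed_at (S k) b
  | App a b => closed_at k a /\ closed_at k b
  | ES a b => closed_at (S k) a /\ closed_at k b
  end.

Definition closed (t : term) : Prop := closed_at 0 t.

Definition normal {A : Type} (R : relation A) (t : A) : Prop :=
  forall t', ~ R t t'.

Definition weakly_normalizing {A : Type} (R : relation A) (t : A) : Prop :=
  exists n, clos_refl_trans A R t n /\ normal R n.

Definition ctx_equiv_S (t u : term) : Prop :=
  forall C : sctx, closed (cplug C t) -> closed (cplug C u) ->
    (weakly_normalizing step_w (cplug C t) <-> weakly_normalizing step_w (cplug C u)).

Inductive lterm : Type :=
| LVar : nat -> lterm
| LLam : lterm -> lterm
| LApp : lterm -> lterm -> lterm.

Fixpoint llift (d c : nat) (t : lterm) : lterm :=
  match t with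
  | LVar n => if n <? c then LVar n else LVar (n + d)
  | LLam b => LLam (llift d (S c) b)
  | LApp a b => LApp (llift d c a) (llift d c b)
  end.

Fixpoint lsubst (k : nat) (v : lterm) (t : lterm) : lterm :=
  match t with
  | LVar n => if n =? k then llift k 0 v
              else if k <? n then LVar (pred n) else LVar n
  | LLam b => LLam (lsubst (S k) v b)
  | LApp a b => LApp (lsubst k v a) (lsubst k v b)
  end.

Inductive step_bv : lterm -> lterm -> Prop :=
| bv_root : forall t b, step_bv (LApp (LLam t) (LLam b)) (lsubst 0 (LLam b) t)
| bv_appL : forall t t' u, step_bv t t' -> step_bv (LApp t u) (LApp t' u)
| bv_appR : forall t u u', step_bv u u' -> step_bv (LApp t u) (LApp t u').

Inductive lctx : Type :=
| LHole : lctx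
| LCLam : lctx -> lctx
| LCAppL : lctx -> lterm -> lctx
| LCAppR : lterm -> lctx -> lctx.

Fixpoint lplug (C : lctx) (t : lterm) : lterm :=
  match C with
  | LHole => t
  | LCLam C' => LLam (lplug C' t)
  | LCAppL C' u => LApp (lplug C' t) u
  | LCAppR u C' => LApp u (lplug C' t)
  end.

Fixpoint lclosed_at (k : nat) (t : lterm) : Prop :=
  match t with
  | LVar n => n < k
  | LLam b => lclosed_at (S k) b
  | LApp a b => lclosed_at k a /\ lclosed_at k b
  end.

Definition lclosed (t : lterm) : Prop := lclosed_at 0 t.

Definition ctx_equiv_V (t u : lterm) : Prop :=
  forall C : lctx, lclosed (lplug C t) -> lclosed (lplug C u) ->
    (weakly_normalizing step_bv (lplug C t) <-> weakly_normalizing step_bv (lplug C u)).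

Fixpoint embed (t : lterm) : term :=
  match t with
  | LVar n => Var n
  | LLam b => Lam (embed b)
  | LApp a b => App (embed a) (embed b)
  end.

(* Main.v *)
Require Import Defs.
From Stdlib Require Import Arith List Relations Lia FunctionalExtensionality Classical.
Import ListNotations.

Definition up_ren (xi : nat -> nat) : nat -> nat :=
  fun n => match n with 0 => 0 | S m => S (xi m) end.

Fixpoint rename (xi : nat -> nat) (t : term) : term :=
  match t with
  | Var n => Var (xi n)
  | Lam b => Lam (rename (up_ren xi) b)
  | App a b => App (rename xi a) (rename xi b)
  | ES a b => ES (rename (up_ren xi) a) (rename xi b)
  end.

Definition scons (x : term) (s : nat -> term) : nat -> term :=
  fun n => match n with 0 => x | S m => s m end.

Definition up (s : nat -> term) : nat -> term :=
  scons (Var 0) (fun n => rename S (s n)).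

Fixpoint subst (s : nat -> term) (t : term) : term :=
  match t with
  | Var n => s n
  | Lam b => Lam (subst (up s) b)
  | App a b => App (subst s a) (subst s b)
  | ES a b => ES (subst (up s) a) (subst s b)
  end.

Lemma rename_rename : forall t xi zeta,
  rename xi (rename zeta t) = rename (fun n => xi (zeta n)) t.
Proof.
  induction t; intros; simpl; try rewrite IHt; try rewrite IHt1; try rewrite IHt2;
  try reflexivity;
  f_equal; f_equal; apply functional_extensionality; intros [|n]; reflexivity.
Qed.

Lemma rename_id : forall t, rename (fun n => n) t = t.
Proof.
  induction t; simpl; f_equal; auto;
  (replace (up_ren (fun n => n)) with (fun n : nat => n) by
    (apply functional_extensionality; intros [|n]; reflexivity)); auto.
Qed.

Lemma lift_rename : forall t d c,
  lift d c t = rename (fun n => if n <? c then n else n + d) t.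
Proof.
  induction t; intros; simpl; try rewrite IHt; try rewrite IHt1; try rewrite IHt2.
  - destruct (n <? c); reflexivity.
  - f_equal. f_equal. apply functional_extensionality; intros [|n]; [reflexivity|].
    simpl. change (S n <? S c) with (n <? c). destruct (n <? c); reflexivity.
  - reflexivity.
  - f_equal. f_equal. apply functional_extensionality; intros [|n]; [reflexivity|].
    simpl. change (S n <? S c) with (n <? c). destruct (n <? c); reflexivity.
Qed.

Lemma lift0 : forall t d, lift d 0 t = rename (fun n => n + d) t.
Proof. intros. rewrite lift_rename. reflexivity. Qed.

Lemma subst_rename : forall t s xi,
  subst s (rename xi t) = subst (fun n => s (xi n)) t.
Proof.
  induction t; intros; simpl; try rewrite IHt; try rewrite IHt1; try rewrite IHt2;
  try reflexivity;
  f_equal; f_equal; apply functional_extensionality; intros [|n]; reflexivity.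
Qed.

Lemma rename_subst : forall t s xi,
  rename xi (subst s t) = subst (fun n => rename xi (s n)) t.
Proof.
  induction t; intros; simpl; try rewrite IHt; try rewrite IHt1; try rewrite IHt2;
  try reflexivity;
  f_equal; f_equal; apply functional_extensionality; intros [|n]; try reflexivity;
  unfold up, scons; rewrite !rename_rename; reflexivity.
Qed.

Lemma up_comp : forall s tau n,
  subst (up tau) (up s n) = up (fun m => subst tau (s m)) n.
Proof.
  intros s tau [|n]; simpl. reflexivity.
  unfold up, scons. rewrite subst_rename, rename_subst. reflexivity.
Qed.

Lemma subst_subst : forall t s tau,
  subst tau (subst s t) = subst (fun n => subst tau (s n)) t.
Proof.
  induction t; intros; simpl; try rewrite IHt; try rewrite IHt1; try rewrite IHt2;
  try reflexivity;
  f_equal; f_equal; apply functional_extensionality; intros n; apply up_comp.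
Qed.

Lemma subst_ids : forall t, subst Var t = t.
Proof.
  induction t; simpl; f_equal; auto;
  (replace (up Var) with Var by
    (apply functional_extensionality; intros [|n]; reflexivity)); auto.
Qed.

Lemma rename_as_subst : forall t xi, rename xi t = subst (fun n => Var (xi n)) t.
Proof.
  induction t; intros; simpl; try rewrite IHt; try rewrite IHt1; try rewrite IHt2;
  try reflexivity;
  f_equal; f_equal; apply functional_extensionality; intros [|n]; reflexivity.
Qed.

Lemma subst_up_scons : forall t s v,
  subst (scons v Var) (subst (up s) t) = subst (scons v s) t.
Proof.
  intros. rewrite subst_subst. f_equal. apply functional_extensionality; intros [|n];
  simpl. reflexivity. unfold up, scons. rewrite subst_rename. apply subst_ids.
Qed.

Lemma subst_scons_comp : forall t s x,
  subst s (subst (scons x Var) t) = subst (scons (subst s x) s) t.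
Proof.
  intros. rewrite subst_subst. f_equal. apply functional_extensionality; intros [|n];
  reflexivity.
Qed.

Lemma subst_shift1 : forall t v, subst (scons v Var) (rename S t) = t.
Proof. intros. rewrite subst_rename. apply subst_ids. Qed.

Inductive ev : term -> term -> Prop :=
| ev_lam : forall b, ev (Lam b) (Lam b)
| ev_app : forall a b a' v r, ev a (Lam a') -> ev b v ->
    ev (subst (scons v Var) a') r -> ev (App a b) r
| ev_es : forall a b v r, ev b v -> ev (subst (scons v Var) a) r -> ev (ES a b) r.

Lemma ev_lam_res : forall x r, ev x r -> exists b, r = Lam b.
Proof. induction 1; eauto. Qed.

Lemma ev_det : forall x r1, ev x r1 -> forall r2, ev x r2 -> r1 = r2.
Proof.
  induction 1; intros r2 H2; inversion H2; subst; auto.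
  - apply IHev1 in H5. injection H5 as <-. apply IHev2 in H6. subst. auto.
  - match goal with H : ev b _ |- _ => apply IHev1 in H end. subst. auto.
Qed.

Lemma ren_plus0 : forall t, rename (fun m => m + 0) t = t.
Proof.
  intros. replace (fun m => m + 0) with (fun m : nat => m) by
    (apply functional_extensionality; intros; lia). apply rename_id.
Qed.

Fixpoint upn (d : nat) (s : nat -> term) : nat -> term :=
  match d with 0 => s | S d' => up (upn d' s) end.

Lemma upn_up : forall d s, upn d (up s) = up (upn d s).
Proof. induction d; intros; simpl; congruence. Qed.

Lemma upn_lt : forall d s n, n < d -> upn d s n = Var n.
Proof.
  induction d; intros s n H. lia.
  destruct n; simpl. reflexivity.
  unfold up, scons. rewrite IHd by lia. reflexivity.
Qed.

Lemma upn_ge : forall d s n, upn d s (n + d) = rename (fun m => m + d) (s n).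
Proof.
  induction d; intros s n; simpl.
  - rewrite Nat.add_0_r, ren_plus0. reflexivity.
  - rewrite Nat.add_succ_r. unfold up at 1, scons. rewrite IHd, rename_rename.
    f_equal. apply functional_extensionality; intros; lia.
Qed.

Lemma L_shift : forall d w s t,
  subst (upn d (scons w s)) (rename (fun m => m + S d) t) =
  subst (fun n => rename (fun m => m + d) (s n)) t.
Proof.
  intros. rewrite subst_rename. f_equal. apply functional_extensionality; intros n.
  replace (n + S d) with (S n + d) by lia. rewrite upn_ge. reflexivity.
Qed.

Lemma L_shift0 : forall d w t,
  subst (upn d (scons w Var)) (rename (fun m => m + S d) t) =
  rename (fun m => m + d) t.
Proof. intros. rewrite L_shift, rename_as_subst. reflexivity. Qed.

Fixpoint wsub (s : nat -> term) (W : wctx) : wctx :=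
  match W with
  | WHole => WHole
  | WAppL W' u => WAppL (wsub s W') (subst s u)
  | WAppR u W' => WAppR (subst s u) (wsub s W')
  | WESArg u W' => WESArg (subst (up s) u) (wsub s W')
  | WESBody W' u => WESBody (wsub (up s) W') (subst s u)
  end.

Lemma wdepth_wsub : forall W s, wdepth (wsub s W) = wdepth W.
Proof. induction W; intros; simpl; auto. Qed.

Lemma subst_wplug : forall W s t,
  subst s (wplug W t) = wplug (wsub s W) (subst (upn (wdepth W) s) t).
Proof.
  induction W; intros; simpl; try rewrite IHW; auto.
  rewrite upn_up. reflexivity.
Qed.

Inductive evS : (nat -> term) -> list term -> (nat -> term) -> Prop :=
| evS_nil : forall s, evS s [] s
| evS_cons : forall s u l v t, ev (subst s u) v -> evS (scons v s) l t ->
    evS s (u :: l) t.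

Lemma ev_splug : forall l s x r,
  ev (subst s (splug l x)) r <-> exists t, evS s l t /\ ev (subst t x) r.
Proof.
  induction l; intros; simpl.
  - split. intros; exists s; split; auto; constructor.
    intros [t [H1 H2]]. inversion H1; subst; auto.
  - split.
    + intros H. inversion H; subst. rewrite subst_up_scons in H4.
      apply IHl in H4. destruct H4 as [t [H5 H6]]. exists t. split; auto.
      econstructor; eauto.
    + intros [t [H1 H2]]. inversion H1; subst. econstructor; eauto.
      rewrite subst_up_scons. apply IHl. eauto.
Qed.

Lemma evS_beyond : forall s l t, evS s l t -> forall n, t (n + length l) = s n.
Proof.
  induction 1; intros; simpl. f_equal; lia.
  rewrite Nat.add_succ_r. change (S (n + length l)) with (S n + length l).
  rewrite IHevS. reflexivity.
Qed.

Lemma hole_case : forall x r v, ev x r -> ev x v -> ev v r.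
Proof.
  intros. assert (r = v) by (eapply ev_det; eauto). subst.
  destruct (ev_lam_res _ _ H0) as [bb ->]. constructor.
Qed.

Lemma ev_plug_val : forall x r, ev x r -> forall W u0 v, ev u0 v ->
  x = wplug W (rename (fun m => m + wdepth W) u0) ->
  ev (wplug W (rename (fun m => m + wdepth W) v)) r.
Proof.
  induction 1; intros W u0 v0 Hu Hx; destruct W; simpl in *; try discriminate;
  try (rewrite ren_plus0 in *; subst;
       eapply hole_case; [ | exact Hu ]; econstructor; eauto).
  - injection Hx as -> ->. econstructor; eauto.
  - injection Hx as -> ->. econstructor; eauto.
  - injection Hx as -> ->. econstructor; eauto.
  - injection Hx as -> ->. econstructor; eauto.
    rewrite subst_wplug. rewrite subst_wplug in IHev2.
    specialize (IHev2 (wsub (scons v Var) W) u0 v0 Hu).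
    rewrite wdepth_wsub in IHev2.
    rewrite (L_shift0 (wdepth W) v v0). rewrite (L_shift0 (wdepth W) v u0) in IHev2.
    apply IHev2. reflexivity.
Qed.

Lemma root_back : forall s s', ssc_root s s' -> forall sg r,
  ev (subst sg s') r -> ev (subst sg s) r.
Proof.
  induction 1; intros sg r H.
  - apply ev_splug in H. destruct H as [t0 [H1 H2]]. simpl in H2.
    inversion H2; subst.
    assert (Eu : subst t0 (lift (length s) 0 u) = subst sg u).
    { rewrite lift0, subst_rename. f_equal. apply functional_extensionality; intros n.
      apply (evS_beyond _ _ _ H1). }
    rewrite Eu in H3. simpl.
    eapply ev_app with (a' := subst (up t0) t); eauto.
    apply ev_splug. exists t0. split; auto. constructor.
  - simpl in *. inversion H; subst. econstructor; eauto.
    rewrite subst_up_scons in *. rewrite subst_wplug in *.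
    rewrite lift0 in H4. rewrite L_shift in H4.
    rewrite <- rename_subst in H4.
    change (subst (upn (wdepth W) (scons v sg)) (Var (wdepth W))) with
      (upn (wdepth W) (scons v sg) (wdepth W)).
    pose proof (upn_ge (wdepth W) (scons v sg) 0) as E.
    change (0 + wdepth W) with (wdepth W) in E. rewrite E. clear E.
    pose proof (ev_plug_val _ _ H4 (wsub (scons v sg) W) (subst sg u) v H2) as HH.
    rewrite wdepth_wsub in HH. apply HH. reflexivity.
  - apply ev_splug in H. destruct H as [t0 [H1 H2]].
    assert (Eu : subst t0 (lift (length s) 0 t) = subst sg t).
    { rewrite lift0, subst_rename. f_equal. apply functional_extensionality; intros n.
      apply (evS_beyond _ _ _ H1). }
    rewrite Eu in H2. simpl.
    econstructor. apply ev_splug. exists t0. split; eauto. constructor.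
    rewrite subst_up_scons. rewrite lift0, subst_rename.
    match goal with |- ev (subst ?f t) r => replace f with sg end. auto.
    apply functional_extensionality; intros n. rewrite Nat.add_1_r. reflexivity.
Qed.

Lemma step_back : forall s s', step_w s s' -> forall sg r,
  ev (subst sg s') r -> ev (subst sg s) r.
Proof.
  induction 1; intros sg r H'; simpl in *.
  - eapply root_back; eauto.
  - inversion H'; subst. econstructor; eauto.
  - inversion H'; subst. econstructor; eauto.
  - inversion H'; subst. econstructor; eauto.
    rewrite subst_up_scons in *. eauto.
  - inversion H'; subst. econstructor; eauto.
Qed.

Lemma steps_back : forall s s', clos_refl_trans _ step_w s s' -> forall r,
  ev s' r -> ev s r.
Proof.
  induction 1; intros r H'; auto.
  rewrite <- (subst_ids x). rewrite <- (subst_ids y) in H'. eapply step_back; eauto.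
Qed.

Inductive answer : term -> Prop :=
| ans_lam : forall b, answer (Lam b)
| ans_es : forall a b, answer a -> answer b -> answer (ES a b).

Fixpoint aval (t : term) : term :=
  match t with
  | ES a b => subst (scons (aval b) Var) (aval a)
  | _ => t
  end.

Lemma aval_rename : forall t xi, aval (rename xi t) = rename xi (aval t).
Proof.
  induction t; intros; simpl; auto.
  rewrite IHt1, IHt2, rename_subst, subst_rename. f_equal.
  apply functional_extensionality; intros [|n]; reflexivity.
Qed.

Lemma answer_rename : forall t, answer t -> forall xi, answer (rename xi t).
Proof. induction 1; intros; simpl; constructor; auto. Qed.

Lemma answer_rename_inv : forall t xi, answer (rename xi t) -> answer t.
Proof.
  induction t; intros xi H; simpl in H; inversion H; subst; constructor; eauto.
Qed.

Lemma answer_aval : forall t, answer t -> exists b, aval t = Lam b.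
Proof.
  induction 1; simpl; eauto. destruct IHanswer1 as [b1 ->]. simpl. eauto.
Qed.

Lemma answer_splug : forall t, answer t ->
  exists l c, t = splug l (Lam c) /\ Forall answer l.
Proof.
  induction 1.
  - exists [], b. auto.
  - destruct IHanswer1 as [l [c [-> Hl]]]. exists (b :: l), c. split; auto.
Qed.

Lemma answer_splug_intro : forall l x, Forall answer l -> answer x -> answer (splug l x).
Proof. induction 1; intros; simpl; auto. constructor; auto. Qed.

Lemma answer_splug_inv : forall l x, answer (splug l x) -> Forall answer l /\ answer x.
Proof.
  induction l; intros x H; simpl in *; auto.
  inversion H; subst. apply IHl in H2. intuition.
Qed.

Lemma answer_wplug_var : forall W k, ~ answer (wplug W (Var k)).
Proof.
  induction W; intros k H; simpl in H; inversion H; subst; eapply IHW; eauto.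
Qed.

Fixpoint sW (l : list term) : wctx :=
  match l with [] => WHole | u :: l' => WESBody (sW l') u end.

Lemma splug_sW : forall l x, splug l x = wplug (sW l) x.
Proof. induction l; intros; simpl; congruence. Qed.

Lemma wdepth_sW : forall l, wdepth (sW l) = length l.
Proof. induction l; simpl; auto. Qed.

Fixpoint wcomp (W W2 : wctx) : wctx :=
  match W with
  | WHole => W2
  | WAppL W' u => WAppL (wcomp W' W2) u
  | WAppR u W' => WAppR u (wcomp W' W2)
  | WESArg u W' => WESArg u (wcomp W' W2)
  | WESBody W' u => WESBody (wcomp W' W2) u
  end.

Lemma wcomp_plug : forall W W2 t, wplug (wcomp W W2) t = wplug W (wplug W2 t).
Proof. induction W; intros; simpl; congruence. Qed.

Inductive envO : (nat -> term) -> wctx -> (nat -> term) -> Prop :=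
| envO_hole : forall r, envO r WHole r
| envO_appL : forall r W s u, envO r W s -> envO r (WAppL W u) s
| envO_appR : forall r W s u, envO r W s -> envO r (WAppR u W) s
| envO_esarg : forall r W s u, envO r W s -> envO r (WESArg u W) s
| envO_esbody : forall r W s u, answer u ->
    envO (scons (subst r (aval u)) r) W s -> envO r (WESBody W u) s.

Lemma envO_comp : forall r W s, envO r W s -> forall W2 s2, envO s W2 s2 ->
  envO r (wcomp W W2) s2.
Proof. induction 1; intros; simpl; try constructor; auto. Qed.

Lemma envO_beyond : forall r W s, envO r W s -> forall j, s (j + wdepth W) = r j.
Proof.
  induction 1; intros; simpl; auto; try (rewrite Nat.add_0_r; reflexivity).
  rewrite Nat.add_succ_r. change (S (j + wdepth W)) with (S j + wdepth W).
  rewrite IHenvO. reflexivity.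
Qed.

Definition VL (r : nat -> term) := forall i, (exists m, r i = Var m) \/ (exists b, r i = Lam b).

Lemma envO_VL : forall r W s, envO r W s -> VL r -> VL s.
Proof.
  induction 1; intros; auto. apply IHenvO. intros [|i]; simpl; auto.
  destruct (answer_aval _ H) as [b ->]. simpl. eauto.
Qed.

Lemma envO_sW : forall l, Forall answer l -> forall r, exists s,
  envO r (sW l) s /\ forall t, subst r (aval (splug l t)) = subst s (aval t).
Proof.
  induction 1; intros r; simpl.
  - exists r. split; auto. constructor.
  - destruct (IHForall (scons (subst r (aval x)) r)) as [s [H1 H2]].
    exists s. split. constructor; auto.
    intros t. rewrite subst_scons_comp. auto.
Qed.

Lemma step_ctx : forall W x y, step_w x y -> step_w (wplug W x) (wplug W y).
Proof.
  induction W; intros; simpl;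
  [auto | apply w_appL | apply w_appR | apply w_esarg | apply w_esbody]; auto.
Qed.

Lemma steps_ctx : forall W x y, clos_refl_trans _ step_w x y ->
  clos_refl_trans _ step_w (wplug W x) (wplug W y).
Proof.
  induction 1. apply rt_step, step_ctx; auto. apply rt_refl. eapply rt_trans; eauto.
Qed.

Lemma VarCase : forall W r s, envO r W s -> forall i, i < wdepth W ->
  exists n, answer n /\ clos_refl_trans _ step_w (wplug W (Var i)) (wplug W n)
    /\ subst s (aval n) = s i.
Proof.
  induction W; intros r s He i Hi; inversion He; subst; simpl in *.
  - lia.
  - destruct (IHW _ _ H3 i Hi) as [n [A [B C]]]. exists n; repeat split; auto.
    apply (steps_ctx (WAppL WHole t)); auto.
  - destruct (IHW _ _ H3 i Hi) as [n [A [B C]]]. exists n; repeat split; auto.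
    apply (steps_ctx (WAppR t WHole)); auto.
  - destruct (IHW _ _ H3 i Hi) as [n [A [B C]]]. exists n; repeat split; auto.
    apply (steps_ctx (WESArg t WHole)); auto.
  - destruct (Nat.eq_dec i (wdepth W)) as [->|Hne].
    + exists (lift (S (wdepth W)) 0 t). repeat split.
      * rewrite lift0. apply answer_rename; auto.
      * apply rt_step. apply w_root. apply root_e.
      * rewrite lift0, aval_rename, subst_rename.
        pose proof (envO_beyond _ _ _ H4) as Hb.
        replace (fun n => s (n + S (wdepth W))) with r.
        -- specialize (Hb 0). simpl in Hb. rewrite Hb. reflexivity.
        -- apply functional_extensionality; intros n.
           rewrite Nat.add_succ_r. change (S (n + wdepth W)) with (S n + wdepth W).
           rewrite Hb. reflexivity.
    + destruct (IHW _ _ H4 i ltac:(lia)) as [n [A [B C]]]. exists n; repeat split; auto.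
      apply (steps_ctx (WESBody WHole t)); auto.
Qed.

Lemma lemH : forall d r, ev d r -> forall W s a, envO Var W s -> d = subst s a ->
  exists n, answer n /\ clos_refl_trans _ step_w (wplug W a) (wplug W n)
    /\ subst s (aval n) = r.
Proof.
  induction 1; intros W s x He Hd.
  - destruct x; simpl in Hd; try discriminate.
    + destruct (Nat.lt_ge_cases n (wdepth W)) as [Hlt|Hge].
      * destruct (VarCase _ _ _ He n Hlt) as [m [A [B C]]].
        exists m; repeat split; auto. congruence.
      * pose proof (envO_beyond _ _ _ He (n - wdepth W)) as Hb.
        replace (n - wdepth W + wdepth W) with n in Hb by lia. congruence.
    + exists (Lam x). repeat split. constructor. apply rt_refl. simpl. auto.
  - assert (VLs : VL s) by (eapply envO_VL; eauto; intros i; left; eauto).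
    destruct x; simpl in Hd; try discriminate.
    + exfalso. destruct (VLs n) as [[m Hm]|[b0 Hm]]; congruence.
    + injection Hd as -> ->.
      destruct (IHev1 (wcomp W (WAppL WHole x2)) s x1) as [n1 [A1 [B1 C1]]]; auto.
      { eapply envO_comp; eauto. repeat constructor. }
      destruct (IHev2 (wcomp W (WAppR n1 WHole)) s x2) as [n2 [A2 [B2 C2]]]; auto.
      { eapply envO_comp; eauto. repeat constructor. }
      destruct (answer_splug _ A1) as [l [c1 [-> Hl]]].
      destruct (envO_sW l Hl s) as [s' [E1 E2]].
      rewrite E2 in C1. simpl in C1. injection C1 as <-.
      pose proof (envO_beyond _ _ _ E1) as Hb. rewrite wdepth_sW in Hb.
      assert (Ev : subst s' (aval (lift (length l) 0 n2)) = v).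
      { rewrite lift0, aval_rename, subst_rename.
        replace (fun n => s' (n + length l)) with s; auto.
        apply functional_extensionality; intros; rewrite Hb; auto. }
      destruct (IHev3 (wcomp (wcomp W (sW l)) (WESBody WHole (lift (length l) 0 n2)))
                  (scons v s') c1) as [n3 [A3 [B3 C3]]].
      { eapply envO_comp. eapply envO_comp; eauto.
        rewrite <- Ev at 1. constructor.
        rewrite lift0; apply answer_rename; auto. constructor. }
      { rewrite subst_up_scons. reflexivity. }
      exists (splug l (ES n3 (lift (length l) 0 n2))). repeat split.
      * apply answer_splug_intro; auto. constructor; auto.
        rewrite lift0; apply answer_rename; auto.
      * eapply rt_trans.
        { rewrite !wcomp_plug in B1. simpl in B1. exact B1. }
        eapply rt_trans.
        { rewrite !wcomp_plug in B2. simpl in B2. exact B2. }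
        eapply rt_trans.
        { apply rt_step. apply step_ctx. apply w_root. apply root_m. }
        rewrite !wcomp_plug in B3. simpl in B3. rewrite !splug_sW. exact B3.
      * rewrite E2. simpl. rewrite subst_scons_comp. rewrite Ev. auto.
  - assert (VLs : VL s) by (eapply envO_VL; eauto; intros i; left; eauto).
    destruct x; simpl in Hd; try discriminate.
    + exfalso. destruct (VLs n) as [[m Hm]|[b0 Hm]]; congruence.
    + injection Hd as -> ->.
      destruct (IHev1 (wcomp W (WESArg x1 WHole)) s x2) as [n2 [A2 [B2 C2]]]; auto.
      { eapply envO_comp; eauto. repeat constructor. }
      destruct (IHev2 (wcomp W (WESBody WHole n2)) (scons v s) x1) as [n1 [A1 [B1 C1]]].
      { eapply envO_comp; eauto. rewrite <- C2. constructor; auto. constructor. }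
      { rewrite subst_up_scons. reflexivity. }
      exists (ES n1 n2). repeat split.
      * constructor; auto.
      * eapply rt_trans.
        { rewrite !wcomp_plug in B2. simpl in B2. exact B2. }
        rewrite !wcomp_plug in B1. simpl in B1. exact B1.
      * simpl. rewrite subst_scons_comp. rewrite C2. auto.
Qed.

Fixpoint size (t : term) : nat :=
  match t with
  | Var _ => 1
  | Lam b => S (size b)
  | App a b => S (size a + size b)
  | ES a b => S (size a + size b)
  end.

Lemma size_rename : forall t xi, size (rename xi t) = size t.
Proof. induction t; intros; simpl; auto. Qed.

Fixpoint ksz (l : list term) : nat :=
  match l with [] => 0 | u :: l' => S (size u + ksz l') end.

Lemma size_splug : forall l x, size (splug l x) = size x + ksz l.
Proof. induction l; intros; simpl; try rewrite IHl; lia. Qed.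

Lemma answer_step : forall n n', step_w n n' -> answer n -> answer n' /\ size n' < size n.
Proof.
  induction 1; intros A; try (inversion A; fail).
  - inversion H; subst; try (inversion A; fail).
    + inversion A; subst. exfalso; eapply answer_wplug_var; eauto.
    + inversion A; subst. rewrite lift0 in H2. apply answer_rename_inv in H2.
      apply answer_splug_inv in H3. destruct H3 as [Hl _]. split.
      * apply answer_splug_intro; auto. rewrite lift0; apply answer_rename; auto.
      * simpl. rewrite !size_splug, !lift0, !size_rename. simpl. lia.
  - inversion A; subst. destruct (IHstep_w H2). split. constructor; auto. simpl; lia.
  - inversion A; subst. destruct (IHstep_w H3). split. constructor; auto. simpl; lia.
Qed.

Lemma ans_WN : forall n, answer n -> weakly_normalizing step_w n.
Proof.
  assert (forall k n, size n < k -> answer n -> weakly_normalizing step_w n).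
  { induction k; intros n Hs A. lia.
    destruct (classic (exists n', step_w n n')) as [[n' Hn']|Hno].
    - destruct (answer_step _ _ Hn' A) as [A' S'].
      destruct (IHk n' ltac:(lia) A') as [m [Hm1 Hm2]].
      exists m. split; auto. eapply rt_trans; [apply rt_step; eauto| auto].
    - exists n. split. apply rt_refl. intros n' H. apply Hno. eauto. }
  intros; eapply H; eauto.
Qed.

Lemma conv_WN : forall s r, ev s r -> weakly_normalizing step_w s.
Proof.
  intros s r H.
  destruct (lemH _ _ H WHole Var s (envO_hole Var) (eq_sym (subst_ids s)))
    as [n [A [B _]]]. simpl in B.
  destruct (ans_WN n A) as [m [Hm1 Hm2]]. exists m. split; auto.
  eapply rt_trans; eauto.
Qed.

Lemma closed_rename : forall t k k' xi, closed_at k t ->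
  (forall n, n < k -> xi n < k') -> closed_at k' (rename xi t).
Proof.
  induction t; intros k k' xi H Hx; simpl in *.
  - auto.
  - eapply IHt; eauto. intros [|n] Hn; simpl; [lia|]. specialize (Hx n). lia.
  - destruct H; split; eauto.
  - destruct H; split; eauto. eapply IHt1; eauto.
    intros [|n] Hn; simpl; [lia|]. specialize (Hx n). lia.
Qed.

Lemma closed_rename_inv : forall t k k' xi, closed_at k' (rename xi t) ->
  (forall n, xi n < k' -> n < k) -> closed_at k t.
Proof.
  induction t; intros k k' xi H Hx; simpl in *.
  - auto.
  - eapply IHt; eauto. intros [|n] Hn; simpl in *; [lia|]. specialize (Hx n). lia.
  - destruct H; split; eauto.
  - destruct H; split; eauto. eapply IHt1; eauto.
    intros [|n] Hn; simpl in *; [lia|]. specialize (Hx n). lia.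
Qed.

Lemma closed_wplug : forall W j t, closed_at j (wplug W t) -> closed_at (j + wdepth W) t.
Proof.
  induction W; intros j x H; simpl in *.
  - rewrite Nat.add_0_r; auto.
  - destruct H; auto.
  - destruct H; auto.
  - destruct H; auto.
  - destruct H. apply IHW in H. rewrite Nat.add_succ_r. auto.
Qed.

Lemma closed_wplug_repl : forall W j t t', closed_at j (wplug W t) ->
  closed_at (j + wdepth W) t' -> closed_at j (wplug W t').
Proof.
  induction W; intros j x x' H H'; simpl in *.
  - rewrite Nat.add_0_r in H'; auto.
  - destruct H; split; eauto.
  - destruct H; split; eauto.
  - destruct H; split; eauto.
  - destruct H; split; eauto. eapply IHW; eauto. rewrite Nat.add_succ_r in H'. auto.
Qed.

Lemma closed_step : forall s s', step_w s s' -> forall k, closed_at k s -> closed_at k s'.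
Proof.
  induction 1; intros k Hc; simpl in *.
  - inversion H; subst; simpl in *.
    + destruct Hc as [H1 H2]. rewrite splug_sW in *.
      pose proof (closed_wplug _ _ _ H1) as H3. simpl in H3.
      eapply closed_wplug_repl; eauto. simpl. rewrite wdepth_sW in *. split; auto.
      rewrite lift0. eapply closed_rename; eauto. intros; lia.
    + destruct Hc as [H1 H2]. split; auto.
      eapply closed_wplug_repl; eauto. rewrite lift0.
      eapply closed_rename; eauto. intros; lia.
    + destruct Hc as [H1 H2]. rewrite splug_sW in *.
      rewrite lift0 in H1. apply (closed_rename_inv _ k) in H1; [| intros; lia].
      eapply closed_wplug_repl; eauto. rewrite wdepth_sW. rewrite lift0.
      eapply closed_rename; eauto. intros; lia.
  - destruct Hc; split; eauto.
  - destruct Hc; split; eauto.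
  - destruct Hc; split; eauto.
  - destruct Hc; split; eauto.
Qed.

Lemma closed_steps : forall s s', clos_refl_trans _ step_w s s' ->
  forall k, closed_at k s -> closed_at k s'.
Proof. induction 1; intros; eauto using closed_step. Qed.

Lemma normal_char : forall n, normal step_w n ->
  answer n \/ exists W k, n = wplug W (Var (k + wdepth W)).
Proof.
  induction n; intros Hn.
  - right. exists WHole, n. simpl. f_equal; lia.
  - left. constructor.
  - assert (N1 : normal step_w n1) by (intros x Hx; apply (Hn (App x n2)); constructor; auto).
    assert (N2 : normal step_w n2) by (intros x Hx; apply (Hn (App n1 x)); apply w_appR; auto).
    destruct (IHn1 N1) as [A1|[W [k ->]]].
    + destruct (IHn2 N2) as [A2|[W [k ->]]].
      * exfalso. destruct (answer_splug _ A1) as [l [c [-> _]]].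
        eapply Hn. apply w_root. apply root_m.
      * right. exists (WAppR n1 W), k. reflexivity.
    + right. exists (WAppL W n2), k. reflexivity.
  - assert (N1 : normal step_w n1) by (intros x Hx; apply (Hn (ES x n2)); apply w_esbody; auto).
    assert (N2 : normal step_w n2) by (intros x Hx; apply (Hn (ES n1 x)); apply w_esarg; auto).
    destruct (IHn2 N2) as [A2|[W [k ->]]].
    + destruct (IHn1 N1) as [A1|[W [k ->]]].
      * left. constructor; auto.
      * destruct k as [|k].
        -- exfalso. eapply Hn. apply w_root. apply root_e.
        -- right. exists (WESBody W n2), k. simpl. do 3 f_equal. lia.
    + right. exists (WESArg n1 W), k. reflexivity.
Qed.

Lemma answer_ev : forall a, answer a -> forall s, ev (subst s a) (subst s (aval a)).
Proof.
  induction 1; intros s; simpl.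
  - constructor.
  - econstructor. apply IHanswer2. rewrite subst_up_scons, subst_scons_comp. auto.
Qed.

Theorem thmA : forall s, closed s ->
  (weakly_normalizing step_w s <-> exists r, ev s r).
Proof.
  intros s Hc. split.
  - intros [n [H1 H2]].
    assert (Cn : closed_at 0 n) by (eapply closed_steps; eauto).
    destruct (normal_char n H2) as [A|[W [k ->]]].
    + exists (aval n). eapply steps_back; eauto.
      pose proof (answer_ev n A Var). rewrite !subst_ids in H. auto.
    + apply closed_wplug in Cn. simpl in Cn. lia.
  - intros [r H]. eapply conv_WN; eauto.
Qed.

Lemma embed_llift : forall t d c, embed (llift d c t) = lift d c (embed t).
Proof.
  induction t; intros; simpl; try rewrite IHt; try rewrite IHt1; try rewrite IHt2; auto.
  destruct (n <? c); auto.
Qed.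

Definition fk (k : nat) (v : lterm) : nat -> term := fun n =>
  if n =? k then lift k 0 (embed v) else if k <? n then Var (pred n) else Var n.

Lemma up_fk : forall k v, up (fk k v) = fk (S k) v.
Proof.
  intros. apply functional_extensionality; intros [|n]. reflexivity.
  unfold up, scons, fk. change (S n =? S k) with (n =? k).
  change (S k <? S n) with (k <? n).
  destruct (n =? k) eqn:E1.
  - rewrite !lift0, rename_rename. f_equal. apply functional_extensionality; intros; lia.
  - destruct (k <? n) eqn:E2; simpl; auto.
    apply Nat.ltb_lt in E2. destruct n; [lia|]. reflexivity.
Qed.

Lemma embed_lsubst : forall t k v, embed (lsubst k v t) = subst (fk k v) (embed t).
Proof.
  induction t; intros; simpl.
  - unfold fk. destruct (n =? k). apply embed_llift.
    destruct (k <? n); auto.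
  - rewrite IHt, up_fk. auto.
  - rewrite IHt1, IHt2. auto.
Qed.

Lemma fk0 : forall v, fk 0 v = scons (embed v) Var.
Proof.
  intros. apply functional_extensionality; intros [|n]; unfold fk; simpl.
  rewrite lift0, ren_plus0. auto. reflexivity.
Qed.

Lemma embed_lsubst0 : forall t v, embed (lsubst 0 v t) = subst (scons (embed v) Var) (embed t).
Proof. intros. rewrite embed_lsubst, fk0. auto. Qed.

Lemma lclosed_llift : forall v a d c, lclosed_at a v -> lclosed_at (a + d) (llift d c v).
Proof.
  induction v; intros; simpl in *.
  - destruct (n <? c); simpl; lia.
  - replace (S (a + d)) with (S a + d) by lia. auto.
  - destruct H; split; auto.
Qed.

Lemma lclosed_mono : forall v a b, lclosed_at a v -> a <= b -> lclosed_at b v.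
Proof.
  induction v; intros; simpl in *; try lia.
  - eapply IHv; eauto. lia.
  - destruct H; split; eauto.
Qed.

Lemma lclosed_lsubst : forall t j m v, lclosed_at (S m) t -> j <= m ->
  lclosed_at (m - j) v -> lclosed_at m (lsubst j v t).
Proof.
  induction t; intros j m v H Hj Hv; simpl in *.
  - destruct (n =? j) eqn:E.
    + apply Nat.eqb_eq in E. subst.
      pose proof (lclosed_llift v (m - j) j 0 Hv) as HH. replace (m - j + j) with m in HH by lia.
      auto.
    + destruct (j <? n) eqn:E2; simpl.
      * apply Nat.ltb_lt in E2. lia.
      * apply Nat.eqb_neq in E. apply Nat.ltb_ge in E2. lia.
  - apply IHt; [exact H | lia | replace (S m - S j) with (m - j) by lia; exact Hv].
  - destruct H; split; eauto.
Qed.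

Lemma lclosed_step : forall t t', step_bv t t' -> forall k, lclosed_at k t -> lclosed_at k t'.
Proof.
  induction 1; intros k Hc; simpl in *.
  - destruct Hc as [H1 H2]. apply lclosed_lsubst; auto. lia.
    replace (k - 0) with k by lia. auto.
  - destruct Hc; split; eauto.
  - destruct Hc; split; eauto.
Qed.

Lemma lclosed_steps : forall t t', clos_refl_trans _ step_bv t t' ->
  forall k, lclosed_at k t -> lclosed_at k t'.
Proof. induction 1; intros; eauto using lclosed_step. Qed.

Lemma lnormal_closed : forall n, normal step_bv n -> lclosed_at 0 n -> exists b, n = LLam b.
Proof.
  induction n; intros Hn Hc; simpl in *.
  - lia.
  - eauto.
  - destruct Hc as [H1 H2].
    destruct IHn1 as [b1 ->]; auto. intros x Hx; apply (Hn (LApp x n2)); constructor; auto.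
    destruct IHn2 as [b2 ->]; auto. intros x Hx; apply (Hn (LApp (LLam b1) x));
      apply bv_appR; auto.
    exfalso. eapply Hn. apply bv_root.
Qed.

Lemma lsteps_appL : forall t t' u, clos_refl_trans _ step_bv t t' ->
  clos_refl_trans _ step_bv (LApp t u) (LApp t' u).
Proof.
  induction 1. apply rt_step; constructor; auto. apply rt_refl. eapply rt_trans; eauto.
Qed.

Lemma lsteps_appR : forall t u u', clos_refl_trans _ step_bv u u' ->
  clos_refl_trans _ step_bv (LApp t u) (LApp t u').
Proof.
  induction 1. apply rt_step; apply bv_appR; auto. apply rt_refl. eapply rt_trans; eauto.
Qed.

Lemma bv_back : forall t t', step_bv t t' -> forall r, ev (embed t') r -> ev (embed t) r.
Proof.
  induction 1; intros r Hr; simpl in *.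
  - rewrite embed_lsubst0 in Hr. econstructor; [constructor|constructor|]. exact Hr.
  - inversion Hr; subst. econstructor; eauto.
  - inversion Hr; subst. econstructor; eauto.
Qed.

Lemma lsteps_back : forall t t', clos_refl_trans _ step_bv t t' -> forall r,
  ev (embed t') r -> ev (embed t) r.
Proof. induction 1; intros; eauto using bv_back. Qed.

Lemma ev_to_bv : forall s r, ev s r -> forall t, embed t = s ->
  exists t', clos_refl_trans _ step_bv t t' /\ embed t' = r.
Proof.
  induction 1; intros t Ht.
  - exists t. split; auto. apply rt_refl.
  - destruct t; simpl in Ht; try discriminate. injection Ht as <- <-.
    destruct (IHev1 t1 eq_refl) as [t1' [R1 E1]].
    destruct (IHev2 t2 eq_refl) as [t2' [R2 E2]].
    destruct t1'; simpl in E1; try discriminate. injection E1 as <-.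
    destruct (ev_lam_res _ _ H0) as [bv ->].
    destruct t2'; simpl in E2; try discriminate. injection E2 as <-.
    destruct (IHev3 (lsubst 0 (LLam t2') t1')) as [t3 [R3 E3]].
    { rewrite embed_lsubst0. reflexivity. }
    exists t3. split; auto.
    eapply rt_trans. apply lsteps_appL; eauto.
    eapply rt_trans. apply lsteps_appR; eauto.
    eapply rt_trans. apply rt_step. apply bv_root. auto.
  - destruct t; simpl in Ht; discriminate.
Qed.

Theorem thmB : forall t, lclosed t ->
  (weakly_normalizing step_bv t <-> exists r, ev (embed t) r).
Proof.
  intros t Hc. split.
  - intros [n [H1 H2]].
    destruct (lnormal_closed n H2) as [b ->]. eapply lclosed_steps; eauto.
    exists (Lam (embed b)). eapply lsteps_back; eauto. simpl. constructor.
  - intros [r H]. destruct (ev_to_bv _ _ H t eq_refl) as [t' [R E]].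
    exists t'. split; auto. destruct (ev_lam_res _ _ H) as [b ->].
    destruct t'; simpl in E; try discriminate.
    intros x Hx. inversion Hx.
Qed.

Fixpoint uT (t : term) : term :=
  match t with
  | Var n => Var n
  | Lam b => Lam (uT b)
  | App a b => App (uT a) (uT b)
  | ES a b => App (Lam (uT a)) (uT b)
  end.

Lemma uT_rename : forall t xi, uT (rename xi t) = rename xi (uT t).
Proof.
  induction t; intros; simpl; try rewrite IHt; try rewrite IHt1; try rewrite IHt2; auto.
Qed.

Lemma uT_subst : forall t s, uT (subst s t) = subst (fun n => uT (s n)) (uT t).
Proof.
  assert (Hup : forall s, (fun n => uT (up s n)) = up (fun n => uT (s n))).
  { intros s. apply functional_extensionality; intros [|n]; simpl. reflexivity.
    unfold up, scons. apply uT_rename. }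
  induction t; intros; simpl; try rewrite IHt; try rewrite IHt1; try rewrite IHt2;
  try rewrite Hup; auto.
Qed.

Lemma uT_scons : forall v, (fun n => uT (scons v Var n)) = scons (uT v) Var.
Proof. intros. apply functional_extensionality; intros [|n]; reflexivity. Qed.

Lemma ev_uT : forall s r, ev s r -> ev (uT s) (uT r).
Proof.
  induction 1; simpl.
  - constructor.
  - econstructor; eauto. rewrite uT_subst, uT_scons in IHev3. eauto.
  - econstructor. constructor. eauto. rewrite uT_subst, uT_scons in IHev2. eauto.
Qed.

Lemma ev_uT_inv : forall s' r', ev s' r' -> forall s, uT s = s' ->
  exists r, ev s r /\ uT r = r'.
Proof.
  induction 1; intros s Hs.
  - destruct s; simpl in Hs; try discriminate. injection Hs as <-.
    exists (Lam s). split; auto. constructor.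
  - destruct s; simpl in Hs; try discriminate; injection Hs as <- <-.
    + destruct (IHev1 s1 eq_refl) as [r1 [R1 E1]].
      destruct (ev_lam_res _ _ R1) as [c1 ->]. simpl in E1. injection E1 as <-.
      destruct (IHev2 s2 eq_refl) as [r2 [R2 <-]].
      destruct (IHev3 (subst (scons r2 Var) c1)) as [r3 [R3 E3]].
      { rewrite uT_subst, uT_scons. auto. }
      exists r3. split; auto. econstructor; eauto.
    + inversion H; subst.
      destruct (IHev2 s2 eq_refl) as [r2 [R2 <-]].
      destruct (IHev3 (subst (scons r2 Var) s1)) as [r3 [R3 E3]].
      { rewrite uT_subst, uT_scons. auto. }
      exists r3. split; auto. econstructor; eauto.
  - destruct s; simpl in Hs; discriminate.
Qed.

Fixpoint unfold (t : term) : lterm :=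
  match t with
  | Var n => LVar n
  | Lam b => LLam (unfold b)
  | App a b => LApp (unfold a) (unfold b)
  | ES a b => LApp (LLam (unfold a)) (unfold b)
  end.

Lemma embed_unfold : forall t, embed (unfold t) = uT t.
Proof. induction t; simpl; congruence. Qed.

Lemma unfold_embed : forall t, unfold (embed t) = t.
Proof. induction t; simpl; congruence. Qed.

Lemma closed_unfold : forall t k, closed_at k t -> lclosed_at k (unfold t).
Proof. induction t; intros k H; simpl in *; intuition. Qed.

Lemma lclosed_embed : forall t k, lclosed_at k t -> closed_at k (embed t).
Proof. induction t; intros k H; simpl in *; intuition. Qed.

Fixpoint eC (C : lctx) : sctx :=
  match C with
  | LHole => CHole
  | LCLam C' => CLam (eC C')
  | LCAppL C' u => CAppL (eC C') (embed u)
  | LCAppR u C' => CAppR (embed u) (eC C')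
  end.

Lemma eC_plug : forall C t, cplug (eC C) (embed t) = embed (lplug C t).
Proof. induction C; intros; simpl; congruence. Qed.

Fixpoint uC (C : sctx) : lctx :=
  match C with
  | CHole => LHole
  | CLam C' => LCLam (uC C')
  | CAppL C' u => LCAppL (uC C') (unfold u)
  | CAppR u C' => LCAppR (unfold u) (uC C')
  | CESBody C' u => LCAppL (LCLam (uC C')) (unfold u)
  | CESArg u C' => LCAppR (LLam (unfold u)) (uC C')
  end.

Lemma uC_plug : forall C x, unfold (cplug C x) = lplug (uC C) (unfold x).
Proof. induction C; intros; simpl; congruence. Qed.

Lemma key1 : forall x, lclosed x ->
  (weakly_normalizing step_bv x <-> weakly_normalizing step_w (embed x)).
Proof.
  intros x Hc. rewrite thmB by auto. rewrite thmA. tauto.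
  apply lclosed_embed; auto.
Qed.

Lemma key2 : forall x, closed x ->
  (weakly_normalizing step_w x <-> weakly_normalizing step_bv (unfold x)).
Proof.
  intros x Hc. rewrite thmA by auto. rewrite thmB by (apply closed_unfold; auto).
  rewrite embed_unfold. split.
  - intros [r H]. exists (uT r). apply ev_uT; auto.
  - intros [r H]. destruct (ev_uT_inv _ _ H x eq_refl) as [r' [H' _]]. eauto.
Qed.

Theorem theorem7p6 : forall t u : lterm,
  ctx_equiv_S (embed t) (embed u) <-> ctx_equiv_V t u.
Proof.
  intros t u. split.
  - intros H C Ht Hu.
    rewrite (key1 _ Ht), (key1 _ Hu), <- !eC_plug.
    apply H; rewrite eC_plug; apply lclosed_embed; auto.
  - intros H C Ht Hu.
    rewrite (key2 _ Ht), (key2 _ Hu), !uC_plug, !unfold_embed.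
    apply H.
    + rewrite <- (unfold_embed t), <- uC_plug. apply closed_unfold; auto.
    + rewrite <- (unfold_embed u), <- uC_plug. apply closed_unfold; auto.
Qed.
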